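(* Let $X\in\mathbb{R}^g$ be a random block, let $\{L_B\}_{B\in\overline{\mathcal C}}$ be nonnegative block losses, and let $S,F$ be a measurable partition of the block space with $p=\mathbb{P}(X\in S)$. Let $R_S^\star=\inf_{B}R_S(B)$ and $R_F^\star=\inf_B R_F(B)$. If grids $B_S,B_F\in\overline{\mathcal C}$ and constants $\alpha_S,\alpha_F$ satisfy $R_S(B_S)\le\alpha_S R_S^\star$ and $R_F(B_F)\le\alpha_F R_F^\star$, then $$R_{\mathrm{PO2}}(B_S,B_F)\le\max\{\alpha_S,\alpha_F\}\,R^\star.$$
   Context: Grid space: $\overline{\mathcal C}:=\{B=(b_0,\dots,b_7):0=b_0\le\cdots\le b_7=1\}$. For a block $X=(X_1,\dots,X_g)$ with $M=\max_i|X_i|$, the absmax block loss is $L_B(X)=M^2\frac1g\sum_i\min_j(|X_i|/M-b_j)^2$ (zero if $M=0$). Conditional risks: $R_S(B):=\mathbb{E}[L_B(X)\mid X\in S]$, $R_F(B):=\mathbb{E}[L_B(X)\mid X\in F]$. Two-grid risk: $R_{\mathrm{PO2}}(B_1,B_2):=\mathbb{E}[\min\{L_{B_1}(X),L_{B_2}(X)\}]$. Best single-grid risk: $R^\star:=\inf_{B\in\overline{\mathcal C}}\mathbb{E}L_B(X)=\inf_B\bigl(pR_S(B)+(1-p)R_F(B)\bigr)$. *)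

(* Defs.v *)
From HB Require Import structures.
From mathcomp Require Import all_boot all_order all_algebra.
From mathcomp Require Import all_classical all_reals all_analysis.
Set Implicit Arguments. Unset Strict Implicit. Unset Printing Implicit Defensive.
Import Order.TTheory GRing.Theory Num.Theory.
Local Open Scope classical_set_scope.
Local Open Scope ring_scope.

Definition is_grid (R : realType) (B : 'I_8 -> R) : Prop :=
  B ord0 = 0 /\ B ord_max = 1 /\ (forall i j : 'I_8, (i <= j)%N -> B i <= B j).

Definition grids (R : realType) : set ('I_8 -> R) := [set B | is_grid B].

Section risks.
Context {d : measure_display} {T : measurableType d} {R : realType} {g : nat}.
Variables (P : probability T R) (X : T -> g.-tuple R)
          (L : ('I_8 -> R) -> g.-tuple R -> R).

Local Open Scope ereal_scope.

Definition probX (S : set (g.-tuple R)) : R := fine (P (X @^-1` S)).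

Definition risk (B : 'I_8 -> R) : \bar R := \int[P]_x (L B (X x))%:E.

Definition cond_risk (S : set (g.-tuple R)) (B : 'I_8 -> R) : \bar R :=
  (\int[P]_(x in X @^-1` S) (L B (X x))%:E) * ((probX S)^-1)%:E.

Definition cond_risk_star (S : set (g.-tuple R)) : \bar R :=
  ereal_inf (cond_risk S @` @grids R).

Definition risk_star : \bar R := ereal_inf (risk @` @grids R).

Definition risk_PO2 (B1 B2 : 'I_8 -> R) : \bar R :=
  \int[P]_x (Num.min (L B1 (X x)) (L B2 (X x)))%:E.

End risks.

(* Main.v *)
Require Import Defs.
From HB Require Import structures.
From mathcomp Require Import all_boot all_order all_algebra.
From mathcomp Require Import all_classical all_reals all_analysis.
From mathcomp Require Import measurable_realfun lebesgue_integral.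
Import Order.TTheory GRing.Theory Num.Theory.
Local Open Scope classical_set_scope.
Local Open Scope ring_scope.

Theorem corollary1 (d : measure_display) (T : measurableType d) (R : realType)
  (g : nat) (P : probability T R) (X : T -> g.-tuple R)
  (L : ('I_8 -> R) -> g.-tuple R -> R)
  (S F : set (g.-tuple R))
  (B_S B_F : 'I_8 -> R) (alpha_S alpha_F : R) :
  measurable_fun setT X ->
  (forall B, is_grid B -> measurable_fun setT (L B)) ->
  (forall B, is_grid B -> forall x, 0 <= L B x) ->
  measurable S -> measurable F -> S `&` F = set0 -> S `|` F = setT ->
  0 < probX P X S < 1 ->
  is_grid B_S -> is_grid B_F ->
  0 <= alpha_S -> 0 <= alpha_F ->
  (cond_risk P X L S B_S <= alpha_S%:E * cond_risk_star P X L S)%E ->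
  (cond_risk P X L F B_F <= alpha_F%:E * cond_risk_star P X L F)%E ->
  (risk_PO2 P X L B_S B_F <= (Num.max alpha_S alpha_F)%:E * risk_star P X L)%E.
Proof.
move=> mX mL L0 mS mF SF0 SFT /andP[p0 p1] gS gF aS0 aF0 hS hF.
have eF : F = ~` S.
  apply/seteqP; split => x.
  - move=> Fx Sx; have : (S `&` F) x by [].
    by rewrite SF0.
  - move=> nSx; have : (S `|` F) x by rewrite SFT.
    by case.
set A := X @^-1` S.
have mA : measurable A by have := mX measurableT S mS; rewrite setTI.
have eC : X @^-1` F = ~` A by rewrite eF preimage_setC.
have mC : measurable (~` A) by apply: measurableC.
set p := probX P X S.
have PA : P A = p%:E.
  rewrite /p /probX fineK // ge0_fin_numE //.
  by apply: (le_lt_trans (probability_le1 P mA)); rewrite ltry.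
have pF : probX P X F = 1 - p.
  by rewrite /probX eC probability_setC // PA.
have q0 : 0 < 1 - p by rewrite subr_gt0.
have split_int : forall h : T -> \bar R, measurable_fun setT h ->
    (forall x, (0 <= h x)%E) ->
    (\int[P]_x h x = \int[P]_(x in A) h x + \int[P]_(x in ~` A) h x)%E.
  move=> h mh h0; rewrite -(setUv A) ge0_integral_setU //.
  - by rewrite setUv.
  - by rewrite disj_set2E setICr.
have mf : forall B, is_grid B -> measurable_fun setT (fun x => (L B (X x))%:E).
  move=> B gB; apply/measurable_EFinP.
  exact: (measurableT_comp (mL B gB) mX).
have IS : forall B, (\int[P]_(x in A) (L B (X x))%:E = p%:E * cond_risk P X L S B)%E.
  move=> B; rewrite /cond_risk -/p muleCA -EFinM mulfV ?mule1 //.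
  by rewrite gt_eqF.
have IF : forall B, (\int[P]_(x in ~` A) (L B (X x))%:E
                      = (1 - p)%:E * cond_risk P X L F B)%E.
  move=> B; rewrite /cond_risk pF eC muleCA -EFinM mulfV ?mule1 //.
  by rewrite gt_eqF.
have star0 : forall U, (0 <= cond_risk_star P X L U)%E.
  move=> U; apply/ereal_infP => y [B gB <-].
  rewrite /cond_risk; apply: mule_ge0.
  - apply: integral_ge0 => x _; rewrite lee_fin.
    by apply: L0.
  - rewrite lee_fin invr_ge0 /probX; apply: fine_ge0; exact: measure_ge0.
set a := Num.max alpha_S alpha_F.
have a0 : 0 <= a by rewrite le_max aS0.
set RS := cond_risk_star P X L S.
set RF := cond_risk_star P X L F.
have key : (p%:E * RS + (1 - p)%:E * RF <= risk_star P X L)%E.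
  apply/ereal_infP => y [B gB <-].
  rewrite /risk (split_int _ (mf B gB)); last by move=> x; rewrite lee_fin L0.
  rewrite IS IF; apply: leeD.
  - apply: lee_wpmul2l; first by rewrite lee_fin ltW.
    by apply: ereal_inf_lbound; exists B.
  - apply: lee_wpmul2l; first by rewrite lee_fin ltW.
    by apply: ereal_inf_lbound; exists B.
have K2 : (a%:E * (p%:E * RS + (1 - p)%:E * RF) <= a%:E * risk_star P X L)%E.
  by apply: lee_wpmul2l => //; exact: key.
apply: le_trans K2.
have mm : measurable_fun setT
    (fun x => (Num.min (L B_S (X x)) (L B_F (X x)))%:E).
  apply/measurable_EFinP.
  apply: (@measurable_minr _ _ _ _ (L B_S \o X) (L B_F \o X)).
  - exact: (measurableT_comp (mL B_S gS) mX).
  - exact: (measurableT_comp (mL B_F gF) mX).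
rewrite /risk_PO2 (split_int _ mm); last first.
  by move=> x; rewrite lee_fin le_min !L0.
rewrite ge0_muleDr; last 2 first.
  - by apply: mule_ge0; [rewrite lee_fin ltW | exact: star0].
  - by apply: mule_ge0; [rewrite lee_fin ltW | exact: star0].
apply: leeD.
- apply: (@le_trans _ _ (\int[P]_(x in A) (L B_S (X x))%:E)%E).
    apply: ge0_le_integral => //.
    + by move=> x _; rewrite lee_fin le_min !L0.
    + exact: measurable_funTS.
    + exact: measurable_funTS (mf _ gS).
    + by move=> x _; rewrite lee_fin ge_min lexx.
  rewrite IS (muleCA a%:E); apply: lee_wpmul2l; first by rewrite lee_fin ltW.
  apply: (le_trans hS); apply: lee_wpmul2r; first exact: star0.
  by rewrite lee_fin le_max lexx.
- apply: (@le_trans _ _ (\int[P]_(x in ~` A) (L B_F (X x))%:E)%E).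
    apply: ge0_le_integral => //.
    + by move=> x _; rewrite lee_fin le_min !L0.
    + exact: measurable_funTS.
    + exact: measurable_funTS (mf _ gF).
    + by move=> x _; rewrite lee_fin ge_min lexx orbT.
  rewrite IF (muleCA a%:E); apply: lee_wpmul2l; first by rewrite lee_fin ltW.
  apply: (le_trans hF); apply: lee_wpmul2r; first exact: star0.
  by rewrite lee_fin le_max lexx orbT.
Qed.
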